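(* Fix single-party measurements on $\mathbb C^2$ given by orthonormal bases $\{|a_i\rangle\}$, $\{|a'_i\rangle\}$, $\{|b_j\rangle\}$, $\{|b'_j\rangle\}$, and let $e_{AB},e_{AB'},e_{A'B},e_{A'B'}$ be four measurements on $\mathbb C^2\otimes\mathbb C^2$ (each given by an orthonormal basis $\{|p_{X_iY_j}\rangle\}_{i,j=1,2}$ of $\mathbb C^4$ with outcomes $\lambda_{X_iY_j}$), performed on a state given by a unit vector $|p\rangle$ (probabilities $p(\lambda_{X_iY_j})=|\langle p_{X_iY_j}|p\rangle|^2$). Call $e_{XY}$ product if $|p_{X_iY_j}\rangle=|x_i\rangle\otimes|y_j\rangle$ for all $i,j$, where $\{|x_i\rangle\}$, $\{|y_j\rangle\}$ are the fixed bases corresponding to $X$ and $Y$. If the marginal distribution law fails for each of the four pairs $(e_{AB},e_{AB'})$, $(e_{A'B},e_{A'B'})$, $(e_{AB},e_{A'B})$, $(e_{AB'},e_{A'B'})$, then at least two of the four measurements are not product (i.e. are entangled).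
   Context: Marginal distribution law: for coincidence measurements $e_{XY}$ ($X\in\{A,A'\}$, $Y\in\{B,B'\}$) with outcomes $\lambda_{X_iY_j}$, $i,j=1,2$, and probabilities $p(\lambda_{X_iY_j})$, the law holds for a pair $e_{XY},e_{XY'}$ sharing the first letter if $\sum_j p(\lambda_{X_iY_j})=\sum_j p(\lambda_{X_iY'_j})$ for $i=1,2$, and for a pair $e_{XY},e_{X'Y}$ sharing the second letter if $\sum_j p(\lambda_{X_jY_i})=\sum_j p(\lambda_{X'_jY_i})$ for $i=1,2$. *)

(* Defs.v *)
From HB Require Import structures.
From mathcomp Require Import all_boot all_order all_algebra.
Set Implicit Arguments. Unset Strict Implicit. Unset Printing Implicit Defensive.
Import Order.TTheory GRing.Theory Num.Theory.
Local Open Scope ring_scope.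

Section Defs.
Variable C : numClosedFieldType.

Definition vec2 := 'I_2 -> C.
(* vectors of C^2 (x) C^2 = C^4 : coordinates indexed by 'I_2 * 'I_2 *)
Definition vec4 := ('I_2 * 'I_2)%type -> C.

Definition dot2 (u v : vec2) : C := \sum_(k : 'I_2) (u k)^* * v k.
Definition dot4 (u v : vec4) : C := \sum_(k : 'I_2 * 'I_2) (u k)^* * v k.

Definition tensor (x y : vec2) : vec4 := fun kl => x kl.1 * y kl.2.

Definition onb2 (x : 'I_2 -> vec2) : Prop :=
  forall i i' : 'I_2, dot2 (x i) (x i') = (i == i')%:R.

Definition onb4 (e : 'I_2 -> 'I_2 -> vec4) : Prop :=
  forall i j i' j' : 'I_2, dot4 (e i j) (e i' j') = ((i == i') && (j == j'))%:R.

Definition prob (e : 'I_2 -> 'I_2 -> vec4) (p : vec4) (i j : 'I_2) : C :=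
  `|dot4 (e i j) p| ^+ 2.

(* marginal distribution law for e_{XY}, e_{XY'} (sharing the first letter) *)
Definition marginal_first (e f : 'I_2 -> 'I_2 -> vec4) (p : vec4) : Prop :=
  forall i : 'I_2, \sum_(j < 2) prob e p i j = \sum_(j < 2) prob f p i j.

(* marginal distribution law for e_{XY}, e_{X'Y} (sharing the second letter) *)
Definition marginal_second (e f : 'I_2 -> 'I_2 -> vec4) (p : vec4) : Prop :=
  forall i : 'I_2, \sum_(j < 2) prob e p j i = \sum_(j < 2) prob f p j i.

Definition is_product (e : 'I_2 -> 'I_2 -> vec4) (x y : 'I_2 -> vec2) : Prop :=
  forall i j : 'I_2, forall kl, e i j kl = tensor (x i) (y j) kl.

End Defs.

(* Main.v *)
Require Import Defs.
From HB Require Import structures.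
From mathcomp Require Import all_boot all_order all_algebra.
From mathcomp Require Import ring.
Import Order.TTheory GRing.Theory Num.Theory.
Local Open Scope ring_scope.

Section H.
Variable C : numClosedFieldType.

Lemma complete2 (b : 'I_2 -> vec2 C) : onb2 b ->
  forall k l : 'I_2, \sum_j b j l * (b j k)^* = (l == k)%:R.
Proof.
move=> Hb k l.
pose M : 'M[C]_2 := \matrix_(j, k) (b j k)^*.
pose N : 'M[C]_2 := \matrix_(k, j) b j k.
have H1 : M *m N = 1%:M.
  apply/matrixP => i j; rewrite !mxE -(Hb i j) /dot2.
  by apply: eq_bigr => m _; rewrite !mxE.
have := mulmx1C H1 => /matrixP /(_ l k); rewrite !mxE => <-.
by apply: eq_bigr => m _; rewrite !mxE.
Qed.

Lemma parseval (b : 'I_2 -> vec2 C) (v : vec2 C) : onb2 b ->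
  \sum_j `|dot2 (b j) v| ^+ 2 = dot2 v v.
Proof.
move=> Hb.
under eq_bigr => j _ do rewrite normCKC /dot2 rmorph_sum mulr_suml.
under eq_bigr => j _ do under eq_bigr => k _ do rewrite mulr_sumr.
rewrite exchange_big /=.
under eq_bigr => k _ do rewrite exchange_big /=.
rewrite /dot2; apply: eq_bigr => k _.
transitivity (\sum_l (v k)^* * v l * \sum_j b j k * (b j l)^*).
  apply: eq_bigr => l _; rewrite mulr_sumr; apply: eq_bigr => j _.
  rewrite rmorphM /= conjCK; ring.
under eq_bigr => l _ do rewrite complete2 //.
rewrite !big_ord_recr big_ord0 /= add0r.
by case: k => [[|[|//]] Hk]; rewrite /= ?mulr1 ?mulr0 ?addr0 ?add0r; congr (_ * v _); apply: val_inj.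
Qed.

Lemma dot4_tensor_l (u v : vec2 C) (p : vec4 C) :
  dot4 (tensor u v) p = dot2 v (fun l => \sum_k (u k)^* * p (k, l)).
Proof.
rewrite /dot4 /dot2 /tensor.
under [RHS]eq_bigr => l _ do rewrite mulr_sumr.
rewrite exchange_big /= (pair_bigA _ (fun k l => (v l)^* * ((u k)^* * p (k, l)))).
apply: eq_bigr => [[k l]] _ /=; rewrite rmorphM /=; ring.
Qed.

Lemma dot4_tensor_r (u v : vec2 C) (p : vec4 C) :
  dot4 (tensor u v) p = dot2 u (fun k => \sum_l (v l)^* * p (k, l)).
Proof.
rewrite /dot4 /dot2 /tensor.
under [RHS]eq_bigr => k _ do rewrite mulr_sumr.
rewrite (pair_bigA _ (fun k l => (u k)^* * ((v l)^* * p (k, l)))).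
apply: eq_bigr => [[k l]] _ /=; rewrite rmorphM /=; ring.
Qed.

Lemma prod_dot (e : 'I_2 -> 'I_2 -> vec4 C) (x y : 'I_2 -> vec2 C) (p : vec4 C) i j : is_product e x y ->
  dot4 (e i j) p = dot4 (tensor (x i) (y j)) p.
Proof. by move=> He; apply: eq_bigr => kl _; rewrite He. Qed.

Lemma marg1 (e f : 'I_2 -> 'I_2 -> vec4 C) (x y y' : 'I_2 -> vec2 C) (p : vec4 C) : onb2 y -> onb2 y' ->
  is_product e x y -> is_product f x y' -> marginal_first e f p.
Proof.
move=> Hy Hy' He Hf i; rewrite /prob.
under eq_bigr => j _ do rewrite (prod_dot _ _ _ p i j He) dot4_tensor_l.
under [RHS]eq_bigr => j _ do rewrite (prod_dot _ _ _ p i j Hf) dot4_tensor_l.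
by rewrite !parseval.
Qed.

Lemma marg2 (e f : 'I_2 -> 'I_2 -> vec4 C) (x x' y : 'I_2 -> vec2 C) (p : vec4 C) : onb2 x -> onb2 x' ->
  is_product e x y -> is_product f x' y -> marginal_second e f p.
Proof.
move=> Hx Hx' He Hf i; rewrite /prob.
under eq_bigr => j _ do rewrite (prod_dot _ _ _ p j i He) dot4_tensor_r.
under [RHS]eq_bigr => j _ do rewrite (prod_dot _ _ _ p j i Hf) dot4_tensor_r.
by rewrite !parseval.
Qed.
End H.

From Stdlib Require Import Classical.

Theorem theorem4 (C : numClosedFieldType)
  (a a' b b' : 'I_2 -> vec2 C)
  (eAB eAB' eA'B eA'B' : 'I_2 -> 'I_2 -> vec4 C) (p : vec4 C) :
  onb2 a -> onb2 a' -> onb2 b -> onb2 b' ->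
  onb4 eAB -> onb4 eAB' -> onb4 eA'B -> onb4 eA'B' ->
  dot4 p p = 1 ->
  ~ marginal_first eAB eAB' p ->
  ~ marginal_first eA'B eA'B' p ->
  ~ marginal_second eAB eA'B p ->
  ~ marginal_second eAB' eA'B' p ->
  (~ is_product eAB a b /\ ~ is_product eAB' a b') \/
  (~ is_product eAB a b /\ ~ is_product eA'B a' b) \/
  (~ is_product eAB a b /\ ~ is_product eA'B' a' b') \/
  (~ is_product eAB' a b' /\ ~ is_product eA'B a' b) \/
  (~ is_product eAB' a b' /\ ~ is_product eA'B' a' b') \/
  (~ is_product eA'B a' b /\ ~ is_product eA'B' a' b').
Proof.
move=> Ha Ha' Hb Hb' _ _ _ _ _ N1 N2 N3 N4.
have I1 : is_product eAB a b -> is_product eAB' a b' -> False.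
  by move=> P Q; apply: N1; exact: (@marg1 C _ _ _ _ _ p Hb Hb' P Q).
have I2 : is_product eA'B a' b -> is_product eA'B' a' b' -> False.
  by move=> P Q; apply: N2; exact: (@marg1 C _ _ _ _ _ p Hb Hb' P Q).
have I3 : is_product eAB a b -> is_product eA'B a' b -> False.
  by move=> P Q; apply: N3; exact: (@marg2 C _ _ _ _ _ p Ha Ha' P Q).
have I4 : is_product eAB' a b' -> is_product eA'B' a' b' -> False.
  by move=> P Q; apply: N4; exact: (@marg2 C _ _ _ _ _ p Ha Ha' P Q).
clear N1 N2 N3 N4.
destruct (classic (is_product eAB a b)); destruct (classic (is_product eAB' a b'));
destruct (classic (is_product eA'B a' b)); destruct (classic (is_product eA'B' a' b')); tauto.
Qed.
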